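(* Let $N$ be an odd positive integer and let $r\ge s\ge 2$, $r'\ge s'\ge2$ with $r\ge r'$ and $s\ge s'$, so that $\Phi_r^s\subset\Phi_{r'}^{s'}$. Then the diagram $$(\Phi_r^s)^{\mathrm{ab}}\to(\Phi_{r'}^{s'})^{\mathrm{ab}},\quad U':(\Phi_r^s)^{\mathrm{ab}}\to(\Phi_{r+1}^s)^{\mathrm{ab}},\quad U':(\Phi_{r'}^{s'})^{\mathrm{ab}}\to(\Phi_{r'+1}^{s'})^{\mathrm{ab}},\quad (\Phi_{r+1}^s)^{\mathrm{ab}}\to(\Phi_{r'+1}^{s'})^{\mathrm{ab}}$$ commutes, i.e. $U'$ followed by the inclusion-induced map $(\Phi_{r+1}^s)^{\mathrm{ab}}\to(\Phi_{r'+1}^{s'})^{\mathrm{ab}}$ equals the inclusion-induced map $(\Phi_r^s)^{\mathrm{ab}}\to(\Phi_{r'}^{s'})^{\mathrm{ab}}$ followed by $U'$. Consequently the Atkin operator $U$ commutes with the inclusion-induced morphism $(\Phi_r^s)^{\mathrm{ab}}\to(\Phi_{r'}^{s'})^{\mathrm{ab}}$.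
   Context: For $M\ge1$, $\Gamma_1(M)=\{\begin{pmatrix}a&b\\c&d\end{pmatrix}\in\mathrm{SL}_2(\mathbb{Z}) : c\equiv0,\ a\equiv d\equiv1 \pmod M\}$, $\Gamma_0(M)=\{c\equiv 0\pmod M\}$, and $\Gamma^0(2)=\{\begin{pmatrix}a&b\\c&d\end{pmatrix}\in\mathrm{SL}_2(\mathbb{Z}): b\equiv0\pmod 2\}$. For $r\ge s\ge2$, $\Phi_r^s:=\Gamma_1(N2^s)\cap\Gamma_0(2^r)$; $G^{\mathrm{ab}}$ denotes the abelianization of a group $G$. Let $t=\begin{pmatrix}1&0\\0&2\end{pmatrix}$. Then $\Phi_r^s\cap\Gamma^0(2)$ has index $2$ in $\Phi_r^s$, and $x\mapsto txt^{-1}$ is an isomorphism $\Phi_r^s\cap\Gamma^0(2)\to\Phi_{r+1}^s$. The operator $U':(\Phi_r^s)^{\mathrm{ab}}\to(\Phi_{r+1}^s)^{\mathrm{ab}}$ is the composite of the transfer $V:(\Phi_r^s)^{\mathrm{ab}}\to(\Phi_r^s\cap\Gamma^0(2))^{\mathrm{ab}}$ with the map induced by $x\mapsto txt^{-1}$; the Atkin operator $U\in\mathrm{End}((\Phi_r^s)^{\mathrm{ab}})$ is $U'$ followed by the map $(\Phi_{r+1}^s)^{\mathrm{ab}}\to(\Phi_r^s)^{\mathrm{ab}}$ induced by inclusion. *)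

(* Defs.v *)
(* Subgroups of SL_2(Z) realised as boolean predicates on
   2x2 rational matrices (so that t = diag(1,2) and its inverse make sense). *)
From mathcomp Require Import all_boot all_order all_algebra.
Set Implicit Arguments. Unset Strict Implicit. Unset Printing Implicit Defensive.
Import GRing.Theory Num.Theory.
Local Open Scope ring_scope.

Definition mat := 'M[rat]_2.

Definition ea (A : mat) := A ord0 ord0.
Definition eb (A : mat) := A ord0 ord_max.
Definition ec (A : mat) := A ord_max ord0.
Definition ed (A : mat) := A ord_max ord_max.

Definition isint (q : rat) : bool := denq q == 1.
Definition congr_mod (q : rat) (a : int) (M : nat) : bool :=
  isint q && (M%:Z %| numq q - a)%Z.

Definition SL2Z : pred mat := fun A =>
  [&& isint (ea A), isint (eb A), isint (ec A), isint (ed A) & \det A == 1].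

Definition Gamma1 (M : nat) : pred mat := fun A =>
  [&& SL2Z A, congr_mod (ec A) 0 M, congr_mod (ea A) 1 M & congr_mod (ed A) 1 M].

Definition Gamma0 (M : nat) : pred mat := fun A =>
  SL2Z A && congr_mod (ec A) 0 M.

Definition Gamma0up2 : pred mat := fun A =>
  SL2Z A && congr_mod (eb A) 0 2.

Definition Phi (N r s : nat) : pred mat := fun A =>
  Gamma1 (N * 2 ^ s) A && Gamma0 (2 ^ r) A.

Definition PhiH (N r s : nat) : pred mat := fun A =>
  Phi N r s A && Gamma0up2 A.

Inductive comm_sub (G : pred mat) : mat -> Prop :=
| comm_sub1 : comm_sub G 1
| comm_subC x y : G x -> G y -> comm_sub G (x^-1 * y^-1 * x * y)
| comm_subM a b : comm_sub G a -> comm_sub G b -> comm_sub G (a * b)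
| comm_subV a : comm_sub G a -> comm_sub G (a^-1).

(* x and y (elements of G) have the same image in G^ab *)
Definition ab_eq (G : pred mat) (x y : mat) : Prop := comm_sub G (x * y^-1).

(* (t1, t2) is a left transversal of H in G, H of index 2:
   every g in G lies in exactly one of t1 H, t2 H *)
Definition transversal2 (G H : pred mat) (t1 t2 : mat) : Prop :=
  [/\ G t1, G t2 & forall g, G g -> H (t1^-1 * g) != H (t2^-1 * g)].

Definition rep (H : pred mat) (t1 t2 g : mat) : mat :=
  if H (t1^-1 * g) then t1 else t2.

(* transfer G^ab -> H^ab computed with the transversal (t1, t2):
   x t_i = t_{sigma i} h_i, V(x) = h_1 h_2 *)
Definition transfer2 (H : pred mat) (t1 t2 x : mat) : mat :=
  ((rep H t1 t2 (x * t1))^-1 * x * t1) * ((rep H t1 t2 (x * t2))^-1 * x * t2).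

Definition tmat : mat :=
  \matrix_(i, j) (if i == j then (if i == ord0 then 1 else 2) else 0).

Definition conj_t (x : mat) : mat := tmat * x * tmat^-1.

Definition Uprime (N r s : nat) (t1 t2 x : mat) : mat :=
  conj_t (transfer2 (PhiH N r s) t1 t2 x).

(* Main.v *)
Require Import Defs.
From mathcomp Require Import all_boot all_order all_algebra ring zify.
Import GRing.Theory Num.Theory.
Local Open Scope ring_scope.
Set Implicit Arguments. Unset Strict Implicit. Unset Printing Implicit Defensive.

Section Grp.
Variable (K HH : pred mat) (phi : mat -> bool).
Hypotheses (Ku : forall a, K a -> a \is a GRing.unit) (K1 : K 1)
  (KM : forall a b, K a -> K b -> K (a*b)) (KV : forall a, K a -> K a^-1)
  (phiM : forall a b, K a -> K b -> phi (a*b) = phi a (+) phi b)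
  (HE : forall a, HH a = K a && ~~ phi a).

Lemma phi1 : phi 1 = false.
Proof. by have := phiM K1 K1; rewrite mulr1; case: (phi 1). Qed.

Lemma phiV a : K a -> phi a^-1 = phi a.
Proof.
move=> Ka; have := phiM (KV Ka) Ka; rewrite mulVr ?Ku // phi1.
by case: (phi a^-1); case: (phi a).
Qed.

Lemma trans_phi t1 t2 : transversal2 K HH t1 t2 -> phi t1 != phi t2.
Proof.
case=> K1t K2t /(_ t1 K1t); rewrite !HE mulVr ?Ku // K1 phi1 /=.
rewrite KM ?KV //= phiM ?KV // phiV //.
by case: (phi t1); case: (phi t2).
Qed.

Lemma transfer_val t1 t2 x : transversal2 K HH t1 t2 -> K x ->
  transfer2 HH t1 t2 x =
  if phi x then t2^-1 * (x * x) * t2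
  else (t1^-1 * x * t1) * (t2^-1 * x * t2).
Proof.
move=> T Kx; have nT := trans_phi T; case: T => Kt1 Kt2 _.
have E a b : K a -> K b -> HH (t1^-1 * (a * b)) = ~~ (phi t1 (+) phi a (+) phi b).
  move=> Ka Kb; rewrite HE !KM ?KV //= !phiM ?KV ?KM // phiV //.
  by rewrite addbA.
rewrite /transfer2 /rep E // E //.
move: nT; case: (phi x); case: (phi t1); case: (phi t2) => //= _.
all: try by rewrite !mulrA.
all: by rewrite -!mulrA (mulrA t1) mulrV ?Ku // mul1r !mulrA.
Qed.
End Grp.

Section Cmp.
Variable (K HH G HG : pred mat) (phi : mat -> bool).
Hypotheses (Ku : forall a, K a -> a \is a GRing.unit) (K1 : K 1)
  (KM : forall a b, K a -> K b -> K (a*b)) (KV : forall a, K a -> K a^-1)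
  (phiM : forall a b, K a -> K b -> phi (a*b) = phi a (+) phi b)
  (HE : forall a, HH a = K a && ~~ phi a)
  (G1 : G 1) (GM : forall a b, G a -> G b -> G (a*b)) (GV : forall a, G a -> G a^-1)
  (GK : forall a, G a -> K a)
  (HGE : forall a, HG a = G a && ~~ phi a).

Let phi1' := phi1 K1 phiM.
Let phiV' := phiV Ku K1 KV phiM.

Lemma HH1 : HH 1. Proof. by rewrite HE K1 phi1'. Qed.
Lemma HHM a b : HH a -> HH b -> HH (a * b).
Proof. rewrite !HE => /andP[Ka pa] /andP[Kb pb]; rewrite KM // phiM //. by case: (phi a) pa; case: (phi b) pb. Qed.
Lemma HHV a : HH a -> HH a^-1.
Proof. rewrite !HE => /andP[Ka pa]; by rewrite KV // phiV'. Qed.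
Lemma HHu a : HH a -> a \is a GRing.unit.
Proof. by rewrite HE => /andP[/Ku]. Qed.

Lemma cs_in a : comm_sub HH a -> HH a.
Proof.
elim=> [|x y Hx Hy|c d _ Hc _ Hd|c _ Hc]; first exact: HH1.
- by apply: HHM; [apply: HHM; [apply: HHM|]|] => //; apply: HHV.
- exact: HHM.
- exact: HHV.
Qed.

Lemma cs_norm a g : comm_sub HH a -> HH g -> comm_sub HH (g^-1 * a * g).
Proof.
move=> ca Hg; have Ha := cs_in ca.
have -> : g^-1 * a * g = a * (a^-1 * g^-1 * a * g).
  by rewrite !mulrA mulrV ?HHu // mul1r.
by apply: comm_subM => //; apply: comm_subC.
Qed.

Definition eqv y z := comm_sub HH (y * z^-1).

Lemma eqv_refl y : HH y -> eqv y y.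
Proof. by move=> Hy; rewrite /eqv mulrV ?HHu //; apply: comm_sub1. Qed.

Lemma eqv_sym y z : HH y -> HH z -> eqv y z -> eqv z y.
Proof.
move=> Hy Hz; rewrite /eqv => /comm_subV.
by rewrite invrM ?unitrV ?HHu // invrK.
Qed.

Lemma eqv_trans y z w : HH z -> eqv y z -> eqv z w -> eqv y w.
Proof.
move=> Hz e1 e2; have := comm_subM e1 e2.
by rewrite mulrA mulrVK ?HHu.
Qed.

Lemma eqv_mul y1 y2 z1 z2 : HH y1 -> HH y2 -> HH z1 -> HH z2 ->
  eqv y1 z1 -> eqv y2 z2 -> eqv (y1 * y2) (z1 * z2).
Proof.
move=> H1 H2 H3 H4 e1 e2.
have := comm_subM (cs_norm e2 (HHV H1)) e1.
rewrite /eqv invrK invrM ?HHu //.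
by rewrite !mulrA mulrVK ?HHu.
Qed.

Lemma eqv_comm a b : HH a -> HH b -> eqv (a * b) (b * a).
Proof.
move=> Ha Hb; have := comm_subC (HHV Ha) (HHV Hb).
by rewrite /eqv !invrK invrM ?HHu // !mulrA.
Qed.

Lemma eqv_conj a b y : K a -> K b -> phi a = phi b -> HH y ->
  eqv (a^-1 * y * a) (b^-1 * y * b).
Proof.
move=> Ka Kb pab Hy.
have Hh : HH (b^-1 * a).
  by rewrite HE KM ?KV //= phiM ?KV // phiV' // pab; case: (phi b).
have Hz : HH (b^-1 * y * b).
  rewrite HE !KM ?KV //=; last by move: Hy; rewrite HE => /andP[].
  move: Hy; rewrite HE => /andP[Ky py].
  rewrite !phiM ?KM ?KV // phiV' //. by case: (phi b) ; case: (phi y) py.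
have -> : a^-1 * y * a = (b^-1 * a)^-1 * (b^-1 * y * b) * (b^-1 * a).
  rewrite invrM ?unitrV ?Ku // invrK !mulrA.
  by rewrite !(mulrK (Ku Kb)).
have := comm_subC Hh (HHV Hz).
by rewrite /eqv invrK.
Qed.

Lemma eqv_transfer t1 t2 u1 u2 x :
  transversal2 G HG t1 t2 -> transversal2 K HH u1 u2 -> G x ->
  eqv (transfer2 HG t1 t2 x) (transfer2 HH u1 u2 x).
Proof.
have Gu a : G a -> a \is a GRing.unit by move=> /GK /Ku.
have phiMG a b : G a -> G b -> phi (a*b) = phi a (+) phi b by move=> /GK ? /GK ?; apply: phiM.
move=> T U Gx.
have nT := trans_phi Gu G1 GM GV phiMG HGE T.
have nU := trans_phi Ku K1 KM KV phiM HE U.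
rewrite (transfer_val Gu G1 GM GV phiMG HGE T Gx) (transfer_val Ku K1 KM KV phiM HE U (GK Gx)).
case: T => Kt1 Kt2 _; case: U => Ku1 Ku2 _.
have {Kt1 Kt2} [Kt1 Kt2] := conj (GK Kt1) (GK Kt2).
have Kx := GK Gx.
have Hc a y : K a -> HH y -> HH (a^-1 * y * a).
  move=> Ka; rewrite !HE => /andP[Ky py]; rewrite !KM ?KV //=.
  rewrite !phiM ?KM ?KV // phiV' //. by case: (phi a) ; case: (phi y) py.
case px: (phi x).
- have Hxx : HH (x * x) by rewrite HE KM //= phiM // px.
  have key a : K a -> eqv (a^-1 * (x * x) * a) (x * x).
    move=> Ka; case pa: (phi a).
    + have := eqv_conj Ka Kx (etrans pa (esym px)) Hxx.
      have -> : x^-1 * (x * x) * x = x * x by rewrite !mulrA mulVr ?Ku // mul1r.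
      done.
    + have := eqv_conj Ka K1 (etrans pa (esym phi1')) Hxx.
      by rewrite invr1 mul1r mulr1.
  apply: (eqv_trans Hxx (key _ Kt2)).
  by apply: eqv_sym; rewrite ?Hc //; apply: key.
- have Hx : HH x by rewrite HE Kx px.
  have [p1 | p1] := boolP (phi t1 == phi u1).
  + apply: eqv_mul; rewrite ?Hc //; apply: eqv_conj => //; first exact/eqP.
    by move: nT nU p1; case: (phi t1); case: (phi t2); case: (phi u1); case: (phi u2).
  + apply: (@eqv_trans _ ((u2^-1 * x * u2) * (u1^-1 * x * u1))); first by rewrite HHM ?Hc.
      apply: eqv_mul; rewrite ?Hc //; apply: eqv_conj => //.
      by move: nT nU p1; case: (phi t1); case: (phi t2); case: (phi u1); case: (phi u2).
      by move: nT nU p1; case: (phi t1); case: (phi t2); case: (phi u1); case: (phi u2).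
    by apply: eqv_comm; rewrite Hc.
Qed.
End Cmp.
Lemma liftE : lift ord0 (ord0 : 'I_1) = ord_max :> 'I_2.
Proof. by apply/val_inj. Qed.
Lemma liftE2 : lift ord_max (ord0 : 'I_1) = ord0 :> 'I_2.
Proof. by apply/val_inj. Qed.
Lemma mul2E (A B : mat) :
  [/\ ea (A * B) = ea A * ea B + eb A * ec B,
      eb (A * B) = ea A * eb B + eb A * ed B,
      ec (A * B) = ec A * ea B + ed A * ec B &
      ed (A * B) = ec A * eb B + ed A * ed B].
Proof. by rewrite /ea /eb /ec /ed !mxE !big_ord_recl !big_ord0 !addr0 liftE. Qed.
Lemma mulEa A B : ea (A * B) = ea A * ea B + eb A * ec B. Proof. by case: (mul2E A B). Qed.
Lemma mulEb A B : eb (A * B) = ea A * eb B + eb A * ed B. Proof. by case: (mul2E A B). Qed.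
Lemma mulEc A B : ec (A * B) = ec A * ea B + ed A * ec B. Proof. by case: (mul2E A B). Qed.
Lemma mulEd A B : ed (A * B) = ec A * eb B + ed A * ed B. Proof. by case: (mul2E A B). Qed.

Lemma det2 (A : mat) : \det A = ea A * ed A - eb A * ec A.
Proof.
rewrite (expand_det_row _ ord0) !big_ord_recl big_ord0 addr0 /cofactor !det_mx11.
by rewrite /ea /eb /ec /ed !mxE /= liftE liftE2 /bump /= expr0 expr1 !mul1r mulN1r mulrN.
Qed.

Lemma ord2P (i : 'I_2) : i = ord0 \/ i = ord_max.
Proof. by case: i => [[|[|//]]] Hi; [left|right]; apply/val_inj. Qed.

Lemma mat_ext (A B : mat) : ea A = ea B -> eb A = eb B -> ec A = ec B -> ed A = ed B -> A = B.
Proof.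
move=> h1 h2 h3 h4; apply/matrixP => i j.
by case: (ord2P i) => ->; case: (ord2P j) => ->.
Qed.

Lemma one2 : [/\ ea (1 : mat) = 1, eb (1 : mat) = 0, ec (1 : mat) = 0 & ed (1 : mat) = 1].
Proof. by rewrite /ea /eb /ec /ed !mxE. Qed.

Definition adj2 (A : mat) : mat := \matrix_(i, j)
  (if i == ord0 then (if j == ord0 then ed A else - eb A)
   else (if j == ord0 then - ec A else ea A)).

Lemma adj2E A : [/\ ea (adj2 A) = ed A, eb (adj2 A) = - eb A,
  ec (adj2 A) = - ec A & ed (adj2 A) = ea A].
Proof. by rewrite /ea /eb /ec /ed !mxE. Qed.

Lemma unit_det1 (A : mat) : \det A = 1 -> A \is a GRing.unit.
Proof. by move=> h; have : A \in unitmx by rewrite unitmxE h unitr1. Qed.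

Lemma inv2 (A : mat) : \det A = 1 -> A^-1 = adj2 A.
Proof.
move=> h; have uA := unit_det1 h.
have e : A * adj2 A = 1.
  case: (adj2E A) => a1 a2 a3 a4; case: one2 => o1 o2 o3 o4.
  move: h; rewrite det2 => h.
  by apply: mat_ext; rewrite ?mulEa ?mulEb ?mulEc ?mulEd ?a1 ?a2 ?a3 ?a4 ?o1 ?o2 ?o3 ?o4 -?h; ring.
by rewrite -[A^-1]mulr1 -e mulKr.
Qed.

Lemma intE q : isint q -> q = (numq q)%:~R.
Proof. by move=> /eqP h; rewrite numqE h mulr1. Qed.

Lemma isint_int (z : int) : isint z%:~R.
Proof. by rewrite /isint denq_int. Qed.

Lemma cmE q (z : int) a M : q = z%:~R -> congr_mod q a M = (M%:Z %| z - a)%Z.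
Proof. by move=> ->; rewrite /congr_mod isint_int numq_int. Qed.

Definition PhiZ (N r s : nat) (a c d : int) :=
  [/\ ((N * 2 ^ s)%:Z %| c)%Z, ((N * 2 ^ s)%:Z %| a - 1)%Z,
      ((N * 2 ^ s)%:Z %| d - 1)%Z & ((2 ^ r)%:Z %| c)%Z].

Definition ents (A : mat) (a b c d : int) :=
  [/\ ea A = a%:~R, eb A = b%:~R, ec A = c%:~R & ed A = d%:~R].

Lemma PhiE N r s A : Phi N r s A -> \det A = 1 /\
  exists a b c d, ents A a b c d /\ PhiZ N r s a c d.
Proof.
rewrite /Phi /Gamma1 /Gamma0 /SL2Z.
move=> /andP[/and4P[/and5P[ia ib ic id /eqP dt] c1 c2 c3] /andP[_ c4]].
split=> //.
exists (numq (ea A)), (numq (eb A)), (numq (ec A)), (numq (ed A)).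
split; first by split; apply: intE.
move: c1 c2 c3 c4.
rewrite (cmE _ _ (intE ic)) (cmE _ _ (intE ia)) (cmE _ _ (intE ic)) (cmE _ _ (intE id)) !subr0.
by move=> *; split.
Qed.

Lemma PhiI N r s A a b c d : \det A = 1 -> ents A a b c d -> PhiZ N r s a c d ->
  Phi N r s A.
Proof.
move=> dt [ea' eb' ec' ed'] [h1 h2 h3 h4].
rewrite /Phi /Gamma1 /Gamma0 /SL2Z ea' eb' ec' ed' !isint_int dt eqxx /=.
by rewrite !(cmE _ _ (erefl _)) !subr0 h1 h2 h3 h4.
Qed.

Lemma Phi_det N r s A : Phi N r s A -> \det A = 1.
Proof. by case/PhiE. Qed.

Lemma Phi_unit N r s A : Phi N r s A -> A \is a GRing.unit.
Proof. by move/Phi_det/unit_det1. Qed.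

Lemma Phi1 N r s : Phi N r s 1.
Proof.
case: one2 => o1 o2 o3 o4.
apply: (@PhiI _ _ _ _ 1 0 0 1); first exact: det1.
  by split; rewrite ?o1 ?o2 ?o3 ?o4.
by split; rewrite ?subrr dvdz0.
Qed.

Lemma PhiM N r s A B : Phi N r s A -> Phi N r s B -> Phi N r s (A * B).
Proof.
case/PhiE=> dA [a1 [b1 [c1 [d1 [[ea1 eb1 ec1 ed1] [h1 h2 h3 h4]]]]]].
case/PhiE=> dB [a2 [b2 [c2 [d2 [[ea2 eb2 ec2 ed2] [k1 k2 k3 k4]]]]]].
apply: (@PhiI _ _ _ _ (a1 * a2 + b1 * c2) (a1 * b2 + b1 * d2)
   (c1 * a2 + d1 * c2) (c1 * b2 + d1 * d2)).
- by rewrite -mulmxE det_mulmx dA dB mulr1.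
- by split; rewrite ?mulEa ?mulEb ?mulEc ?mulEd ?ea1 ?eb1 ?ec1 ?ed1 ?ea2 ?eb2 ?ec2 ?ed2 !intrD !intrM.
set M := (N * 2 ^ s)%:Z.
split.
- by apply: rpredD; [apply: dvdz_mulr | apply: dvdz_mull].
- have -> : a1 * a2 + b1 * c2 - 1 = (a1 - 1) * a2 + (a2 - 1) + b1 * c2 by ring.
  by apply: rpredD; [apply: rpredD; [apply: dvdz_mulr|] | apply: dvdz_mull].
- have -> : c1 * b2 + d1 * d2 - 1 = c1 * b2 + (d1 - 1) * d2 + (d2 - 1) by ring.
  by apply: rpredD; [apply: rpredD; [apply: dvdz_mulr|apply: dvdz_mulr] |].
- by apply: rpredD; [apply: dvdz_mulr | apply: dvdz_mull].
Qed.

Lemma PhiV N r s A : Phi N r s A -> Phi N r s A^-1.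
Proof.
move=> PA; have dA := Phi_det PA; rewrite inv2 //.
case/PhiE: PA => _ [a1 [b1 [c1 [d1 [[ea1 eb1 ec1 ed1] [h1 h2 h3 h4]]]]]].
case: (adj2E A) => x1 x2 x3 x4.
apply: (@PhiI _ _ _ _ d1 (- b1) (- c1) a1).
- by rewrite det2 x1 x2 x3 x4 -dA det2; ring.
- by split; rewrite ?x1 ?x2 ?x3 ?x4 ?ea1 ?eb1 ?ec1 ?ed1 ?intrN.
by split; rewrite ?rpredN.
Qed.

Lemma Phi_sub N r s r' s' A : (r' <= r)%N -> (s' <= s)%N -> Phi N r s A -> Phi N r' s' A.
Proof.
move=> hr hs PA; have dA := Phi_det PA.
case/PhiE: PA => _ [a1 [b1 [c1 [d1 [E [h1 h2 h3 h4]]]]]].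
apply: (PhiI dA E).
have m1 : ((N * 2 ^ s')%:Z %| (N * 2 ^ s)%:Z)%Z.
  by rewrite dvdzE /= dvdn_mul // dvdn_exp2l.
have m2 : ((2 ^ r')%:Z %| (2 ^ r)%:Z)%Z by rewrite dvdzE /= dvdn_exp2l.
by split; apply: dvdz_trans; eassumption.
Qed.

Definition phiP (A : mat) := ~~ Gamma0up2 A.

Lemma phiE N r s A b : Phi N r s A -> eb A = b%:~R -> phiP A = ~~ (2 %| b)%Z.
Proof.
case/andP=> /and4P[sA _ _ _] _ e.
by rewrite /phiP /Gamma0up2 sA (cmE _ _ e) subr0.
Qed.

Lemma par2 (z1 z2 : int) : (2 %| z1+z2)%Z = ((2 %| z1)%Z == (2%|z2)%Z).
Proof.
case: (boolP (2%|z1)%Z); case: (boolP (2%|z2)%Z) => /= h1 h2; apply/idP/idP; lia.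
Qed.

Lemma Phi_phiM N r s A B : (0 < s)%N -> Phi N r s A -> Phi N r s B ->
  phiP (A * B) = phiP A (+) phiP B.
Proof.
move=> s0 PA PB.
have PA' := PA; have PB' := PB.
case/PhiE: PA => _ [a1 [b1 [c1 [d1 [[ea1 eb1 ec1 ed1] [h1 h2 h3 h4]]]]]].
case/PhiE: PB => _ [a2 [b2 [c2 [d2 [[ea2 eb2 ec2 ed2] [k1 k2 k3 k4]]]]]].
have m2 : (2 %| (N * 2 ^ s)%:Z)%Z.
  by rewrite dvdzE /=; apply: dvdn_mull; apply: dvdn_exp.
have e : eb (A * B) = (a1 * b2 + b1 * d2)%:~R.
  by rewrite mulEb ea1 eb1 eb2 ed2 intrD !intrM.
rewrite (phiE (PhiM PA' PB') e) (phiE PA' eb1) (phiE PB' eb2).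
have -> : a1 * b2 + b1 * d2 = (b1 + b2) + ((a1 - 1) * b2 + b1 * (d2 - 1)) by ring.
rewrite rpredDr; last first.
  apply: rpredD; [apply: dvdz_mulr | apply: dvdz_mull]; exact: dvdz_trans m2 _.
rewrite par2.
by case: (2 %| b1)%Z; case: (2 %| b2)%Z.
Qed.

Definition tinv : mat := \matrix_(i, j)
  (if i == j then (if i == ord0 then 1 else 2^-1) else 0).

Lemma tE : [/\ ea tmat = 1, eb tmat = 0, ec tmat = 0 & ed tmat = 2].
Proof. by rewrite /ea /eb /ec /ed !mxE. Qed.
Lemma tiE : [/\ ea tinv = 1, eb tinv = 0, ec tinv = 0 & ed tinv = 2^-1].
Proof. by rewrite /ea /eb /ec /ed !mxE. Qed.

Lemma tunit : tmat \is a GRing.unit.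
Proof.
have : tmat \in unitmx.
  rewrite unitmxE det2; case: tE => -> -> -> ->.
  by rewrite mulr0 subr0 mul1r unitfE.
by [].
Qed.

Lemma tinvE : tmat^-1 = tinv.
Proof.
have e : tmat * tinv = 1.
  case: tE => a1 a2 a3 a4; case: tiE => b1 b2 b3 b4; case: one2 => o1 o2 o3 o4.
  by apply: mat_ext; rewrite ?mulEa ?mulEb ?mulEc ?mulEd ?a1 ?a2 ?a3 ?a4 ?b1 ?b2 ?b3 ?b4 ?o1 ?o2 ?o3 ?o4 ?mulr0 ?mul0r ?addr0 ?add0r ?mulr1 ?mul1r ?divff.
by rewrite -[tmat^-1]mulr1 -e mulKr // tunit.
Qed.

Lemma conjE y : [/\ ea (conj_t y) = ea y, eb (conj_t y) = eb y / 2,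
  ec (conj_t y) = 2 * ec y & ed (conj_t y) = ed y].
Proof.
rewrite /conj_t tinvE.
case: tE => a1 a2 a3 a4; case: tiE => b1 b2 b3 b4.
rewrite !mulEa !mulEb !mulEc !mulEd a1 a2 a3 a4 b1 b2 b3 b4.
split; first (by ring); first (by ring); first (by ring).
by rewrite mulr0 add0r mul0r add0r mulrAC divff // mul1r.
Qed.

Lemma conj_Phi N r s y : PhiH N r s y -> Phi N r.+1 s (conj_t y).
Proof.
case/andP=> Py /andP[_ cb].
have dy := Phi_det Py.
case/PhiE: Py => _ [a1 [b1 [c1 [d1 [[ea1 eb1 ec1 ed1] [h1 h2 h3 h4]]]]]].
move: cb; rewrite (cmE _ _ eb1) subr0 => /dvdzP[k bk].
case: (conjE y) => x1 x2 x3 x4.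
apply: (@PhiI _ _ _ _ a1 k (c1 * 2) d1).
- rewrite -dy !det2 x1 x2 x3 x4.
  by field.
- split; rewrite ?x1 ?x2 ?x3 ?x4 ?ea1 ?ed1 //.
  + by rewrite eb1 bk intrM mulrK // unitfE.
  + by rewrite ec1 intrM mulrC.
split => //; first exact: dvdz_mulr.
by rewrite expnSr PoszM; apply: dvdz_mul h4 (dvdzz _).
Qed.

Lemma conj_tM a b : conj_t (a * b) = conj_t a * conj_t b.
Proof. by rewrite /conj_t !mulrA mulrVK ?tunit. Qed.

Lemma conj_t1 : conj_t 1 = 1.
Proof. by rewrite /conj_t mulr1 mulrV ?tunit. Qed.

Lemma conj_tV a : a \is a GRing.unit -> conj_t a^-1 = (conj_t a)^-1.
Proof.
move=> ua; rewrite /conj_t !invrM ?unitrMl ?unitrMr ?unitrV ?tunit // invrK.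
by rewrite !mulrA.
Qed.

Lemma cs_map (H K : pred mat) z :
  (forall y, H y -> y \is a GRing.unit) -> (forall y, H y -> K (conj_t y)) ->
  (forall y, comm_sub H y -> H y) ->
  comm_sub H z -> comm_sub K (conj_t z).
Proof.
move=> Hu HK Hin; elim=> [|x y Hx Hy|c d _ Hc _ Hd|c cc Hc].
- by rewrite conj_t1; apply: comm_sub1.
- rewrite !conj_tM !conj_tV ?Hu //; exact: comm_subC (HK _ Hx) (HK _ Hy).
- by rewrite conj_tM; apply: comm_subM.
- by rewrite conj_tV ?Hu ?Hin //; apply: comm_subV.
Qed.

Lemma cs_mono (H K : pred mat) z : (forall y, H y -> K y) ->
  comm_sub H z -> comm_sub K z.
Proof.
move=> HK; elim=> *; [apply: comm_sub1|apply: comm_subC; auto|apply: comm_subM|apply: comm_subV]; done.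
Qed.

Lemma transfer_in (K HH : pred mat) u1 u2 x :
  (forall a b, K a -> K b -> K (a*b)) -> (forall a, K a -> K a^-1) ->
  K u1 -> K u2 -> K x -> K (transfer2 HH u1 u2 x).
Proof.
move=> KM KV k1 k2 kx; rewrite /transfer2 /rep.
by case: ifP => _; case: ifP => _; repeat (apply: (KM) || apply: (KV)) => //.
Qed.

Theorem lemma3p2 (N r s r' s' : nat) :
  odd N -> (0 < N)%N ->
  (2 <= s)%N -> (s <= r)%N -> (2 <= s')%N -> (s' <= r')%N ->
  (r' <= r)%N -> (s' <= s)%N ->
  forall t1 t2 u1 u2 : mat,
  transversal2 (Phi N r s) (PhiH N r s) t1 t2 ->
  transversal2 (Phi N r' s') (PhiH N r' s') u1 u2 ->
  forall x : mat, Phi N r s x ->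
    (* inclusion o U'  =  U' o inclusion  in (Phi_{r'+1}^{s'})^ab *)
    ab_eq (Phi N r'.+1 s') (Uprime N r s t1 t2 x) (Uprime N r' s' u1 u2 x) /\
    (* consequently: inclusion o U = U o inclusion in (Phi_{r'}^{s'})^ab *)
    ab_eq (Phi N r' s') (Uprime N r s t1 t2 x) (Uprime N r' s' u1 u2 x).
Proof.
move=> _ _ _ _ hs' _ hr hs t1 t2 u1 u2 T U x Px.
have s0 : (0 < s')%N by apply: leq_trans hs'.
have HE N0 r0 s0' a : PhiH N0 r0 s0' a = Phi N0 r0 s0' a && ~~ phiP a.
  by rewrite /PhiH /phiP negbK.
have e := eqv_transfer (@Phi_unit N r' s') (Phi1 N r' s') (@PhiM N r' s')
  (@PhiV N r' s') (fun a b => @Phi_phiM N r' s' a b s0) (HE N r' s')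
  (Phi1 N r s) (@PhiM N r s) (@PhiV N r s) (fun a => @Phi_sub N r s r' s' a hr hs)
  (HE N r s) T U Px.
have uV : transfer2 (PhiH N r' s') u1 u2 x \is a GRing.unit.
  apply: (@Phi_unit N r' s'); apply: transfer_in; [exact: PhiM|exact: PhiV| | |].
  - by case: U.
  - by case: U.
  - exact: Phi_sub Px.
have c1 : ab_eq (Phi N r'.+1 s') (Uprime N r s t1 t2 x) (Uprime N r' s' u1 u2 x).
  rewrite /ab_eq /Uprime -conj_tV // -conj_tM.
  apply: cs_map e.
  - by move=> y /andP[/Phi_unit].
  - exact: conj_Phi.
  - move=> y; apply: (@cs_in (Phi N r' s') (PhiH N r' s') phiP).
    + exact: Phi_unit.
    + exact: Phi1.
    + exact: PhiM.
    + exact: PhiV.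
    + by move=> a b; apply: Phi_phiM.
    + exact: HE.
split=> //.
by apply: cs_mono c1 => y; apply: Phi_sub.
Qed.
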